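(* Let $M$ be a timelike surface in $\mathbb{R}^{n,1}$ with a canonical null direction with respect to some constant vector $Z$. If the mean curvature vector $\vec H$ of $M$ is parallel in the normal bundle ($\nabla^\perp\vec H=0$), then $M$ is minimal, i.e. $\vec H=0$.
   Context: $\mathbb{R}^{n,1}$ is $\mathbb{R}^{n+1}$ with the metric $-dx_1^2+dx_2^2+\dots+dx_{n+1}^2$. A surface is timelike if the induced metric has signature $(1,1)$; a vector $v$ is lightlike if $v\ne0$ and $\langle v,v\rangle=0$. For a constant vector $Z$, $Z=Z^\top+Z^\perp$ along $M$ (tangent and normal parts); $M$ has a canonical null direction with respect to $Z$ if $Z^\top$ is lightlike everywhere on $M$. $\vec H=\frac12\operatorname{tr}II$ is the mean curvature vector and $\nabla^\perp$ the normal connection. *)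

(* Defs.v *)
From Stdlib Require Import Reals.
Open Scope R_scope.

(* Vectors of R^{n,1}: coordinates x_0, ..., x_n (indices > n are ignored);
   x_0 is the timelike coordinate. *)
Definition vec := nat -> R.

Definition eta (i : nat) : R := match i with O => -1 | _ => 1 end.

Definition ip (n : nat) (x y : vec) : R :=
  sum_f_R0 (fun i => eta i * x i * y i) n.

Definition lightlike (n : nat) (x : vec) : Prop :=
  (exists i, (i <= n)%nat /\ x i <> 0) /\ ip n x x = 0.

Definition vzero (n : nat) (x : vec) : Prop := forall i, (i <= n)%nat -> x i = 0.

(* Induced metric of a parametrized surface with tangent vectors a = f_u, b = f_v *)
Definition gE n (a b : vec) := ip n a a.
Definition gF n (a b : vec) := ip n a b.
Definition gG n (a b : vec) := ip n b b.
Definition gdet n (a b : vec) := gE n a b * gG n a b - gF n a b * gF n a b.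

(* Timelike: induced metric has signature (1,1), i.e. (for a 2x2 symmetric
   matrix) negative determinant. *)
Definition timelike_at n (a b : vec) : Prop := gdet n a b < 0.

(* Tangent part of X (orthogonal projection onto span(a,b) w.r.t. the
   nondegenerate induced metric), and normal part. *)
Definition tang n (a b X : vec) : vec := fun i =>
  let W := gdet n a b in
  let xa := ip n X a in let xb := ip n X b in
  ((gG n a b * xa - gF n a b * xb) / W) * a i
  + ((gE n a b * xb - gF n a b * xa) / W) * b i.

Definition norm_part n (a b X : vec) : vec := fun i => X i - tang n a b X i.

(* Mean curvature vector H = 1/2 tr_g II = 1/2 (g^{ij} f_ij)^perp *)
Definition meanH n (fu fv fuu fuv fvv : vec) : vec :=
  let W := gdet n fu fv in
  let L : vec := fun i =>
      (gG n fu fv / W) * fuu i - 2 * (gF n fu fv / W) * fuv i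
      + (gE n fu fv / W) * fvv i in
  fun i => / 2 * norm_part n fu fv L i.

Definition open2 (U : R -> R -> Prop) : Prop :=
  forall u v, U u v -> exists r, 0 < r /\
    forall u' v', Rabs (u' - u) < r -> Rabs (v' - v) < r -> U u' v'.

Definition cont2 (U : R -> R -> Prop) (g : R -> R -> R) : Prop :=
  forall u v, U u v -> forall eps, 0 < eps -> exists d, 0 < d /\
    forall u' v', U u' v' -> Rabs (u' - u) < d -> Rabs (v' - v) < d ->
      Rabs (g u' v' - g u v) < eps.

Fixpoint Ck (U : R -> R -> Prop) (k : nat) (g : R -> R -> R) : Prop :=
  match k with
  | O => cont2 U g
  | S k' => exists gu gv : R -> R -> R,
      (forall u v, U u v ->
         derivable_pt_lim (fun s => g s v) u (gu u v) /\
         derivable_pt_lim (fun t => g u t) v (gv u v)) /\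
      Ck U k' gu /\ Ck U k' gv
  end.

Definition smooth2 U g : Prop := forall k, Ck U k g.

Definition smooth_map n U (f : R -> R -> vec) : Prop :=
  forall i, (i <= n)%nat -> smooth2 U (fun u v => f u v i).

Definition pdu n (f : R -> R -> vec) (u v : R) (d : vec) : Prop :=
  forall i, (i <= n)%nat -> derivable_pt_lim (fun s => f s v i) u (d i).
Definition pdv n (f : R -> R -> vec) (u v : R) (d : vec) : Prop :=
  forall i, (i <= n)%nat -> derivable_pt_lim (fun t => f u t i) v (d i).

(* Main.v *)
Require Import Defs.
From Stdlib Require Import Reals Lra Lia.
From Coquelicot Require Import Coquelicot.
Open Scope R_scope.


Lemma ball_R (x y : R) (e : posreal) : Rabs (y - x) < e -> ball x e y.
Proof. intros H. exact H. Qed.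

Lemma deriv_ext_loc (f g : R -> R) x l r : 0 < r ->
  (forall y, Rabs (y - x) < r -> f y = g y) ->
  derivable_pt_lim f x l -> derivable_pt_lim g x l.
Proof.
  intros Hr He Hd. apply is_derive_Reals. apply is_derive_Reals in Hd.
  apply (is_derive_ext_loc f g x l); auto.
  exists (mkposreal r Hr). intros y Hy. apply He. exact Hy.
Qed.

Lemma deriv_zero_loc (f : R -> R) x l r : 0 < r ->
  (forall y, Rabs (y - x) < r -> f y = 0) ->
  derivable_pt_lim f x l -> l = 0.
Proof.
  intros Hr He Hd.
  assert (H0 : derivable_pt_lim (fun _ => 0) x l).
  { apply (deriv_ext_loc f _ x l r); auto. }
  apply (uniqueness_limite (fun _ => 0) x); auto.
  apply derivable_pt_lim_const.
Qed.


Lemma sq_shrink u0 u r (z:R) : Rabs (u - u0) < r -> Rabs (z - u) < r - Rabs (u - u0) -> Rabs (z - u0) < r.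
Proof.
  intros H1 H2. replace (z - u0) with ((z-u) + (u-u0)) by ring.
  eapply Rle_lt_trans. apply Rabs_triang. lra.
Qed.

Lemma mixed_sym (U : R -> R -> Prop) (g Gu Gv : R -> R -> R) u0 v0 m :
  open2 U -> smooth2 U g -> U u0 v0 ->
  (forall u v, U u v -> derivable_pt_lim (fun s => g s v) u (Gu u v)) ->
  (forall u v, U u v -> derivable_pt_lim (fun t => g u t) v (Gv u v)) ->
  derivable_pt_lim (fun t => Gu u0 t) v0 m ->
  derivable_pt_lim (fun s => Gv s v0) u0 m.
Proof.
  intros hU hs hu0 hGu hGv hm.
  destruct (hs 2%nat) as [gu [gv [hd [h1 h2]]]].
  destruct h1 as [guu [guv [hdu [cuu cuv]]]].
  destruct h2 as [gvu [gvv [hdv [cvu cvv]]]].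
  simpl in cuu, cuv, cvu, cvv.
  destruct (hU u0 v0 hu0) as [r [hr hball]].
  assert (EGu : forall u v, U u v -> Gu u v = gu u v).
  { intros u v H. eapply uniqueness_limite. apply hGu; auto. apply hd; auto. }
  assert (EGv : forall u v, U u v -> Gv u v = gv u v).
  { intros u v H. eapply uniqueness_limite. apply hGv; auto. apply hd; auto. }
  assert (D1 : forall u v, Rabs (u - u0) < r -> Rabs (v - v0) < r ->
     Derive (fun z => Derive (fun t => g z t) v) u = gvu u v).
  { intros u v Hu Hv. apply is_derive_unique.
    apply (is_derive_ext_loc (fun z => gv z v)).
    - assert (Hp : 0 < r - Rabs (u - u0)) by lra.
      exists (mkposreal _ Hp). intros z Hz. simpl in Hz.
      assert (Uz : U z v) by (apply hball; auto; eapply sq_shrink; eauto).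
      symmetry. apply is_derive_unique. apply is_derive_Reals. apply hd; auto.
    - apply is_derive_Reals. apply hdv. apply hball; auto. }
  assert (D2 : forall u v, Rabs (u - u0) < r -> Rabs (v - v0) < r ->
     Derive (fun z => Derive (fun t => g t z) u) v = guv u v).
  { intros u v Hu Hv. apply is_derive_unique.
    apply (is_derive_ext_loc (fun z => gu u z)).
    - assert (Hp : 0 < r - Rabs (v - v0)) by lra.
      exists (mkposreal _ Hp). intros z Hz. simpl in Hz.
      assert (Uz : U u z) by (apply hball; auto; eapply sq_shrink; eauto).
      symmetry. apply is_derive_unique. apply is_derive_Reals. apply hd; auto.
    - apply is_derive_Reals. apply hdu. apply hball; auto. }
  assert (Hr0 : Rabs (u0 - u0) < r) by (rewrite Rminus_diag, Rabs_R0; lra).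
  assert (Hr0' : Rabs (v0 - v0) < r) by (rewrite Rminus_diag, Rabs_R0; lra).
  assert (SW : gvu u0 v0 = guv u0 v0).
  { rewrite <- (D1 u0 v0), <- (D2 u0 v0); auto.
    apply Schwarz.
    - assert (Hp : 0 < r / 2) by lra. exists (mkposreal _ Hp). simpl.
      intros u v Hu Hv.
      assert (Hu' : Rabs (u - u0) < r) by lra.
      assert (Hv' : Rabs (v - v0) < r) by lra.
      assert (Uuv : U u v) by auto.
      split; [|split; [|split]].
      + exists (gu u v). apply is_derive_Reals. apply hd; auto.
      + exists (gv u v). apply is_derive_Reals. apply hd; auto.
      + exists (gvu u v).
        apply (is_derive_ext_loc (fun z => gv z v)).
        * assert (Hp' : 0 < r - Rabs (u - u0)) by lra.
          exists (mkposreal _ Hp'). intros z Hz. simpl in Hz.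
          assert (Uz : U z v) by (apply hball; auto; eapply sq_shrink; eauto).
          symmetry. apply is_derive_unique. apply is_derive_Reals. apply hd; auto.
        * apply is_derive_Reals. apply hdv; auto.
      + exists (guv u v).
        apply (is_derive_ext_loc (fun z => gu u z)).
        * assert (Hp' : 0 < r - Rabs (v - v0)) by lra.
          exists (mkposreal _ Hp'). intros z Hz. simpl in Hz.
          assert (Uz : U u z) by (apply hball; auto; eapply sq_shrink; eauto).
          symmetry. apply is_derive_unique. apply is_derive_Reals. apply hd; auto.
        * apply is_derive_Reals. apply hdu; auto.
    - intros eps. destruct (cvu u0 v0 hu0 eps (cond_pos eps)) as [d [hd0 hdd]].
      assert (Hp : 0 < Rmin d r) by (apply Rmin_pos; lra).
      exists (mkposreal _ Hp). simpl. intros u v Hu Hv.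
      assert (Hu1 : Rabs (u - u0) < d) by (eapply Rlt_le_trans; [exact Hu| apply Rmin_l]).
      assert (Hu2 : Rabs (u - u0) < r) by (eapply Rlt_le_trans; [exact Hu| apply Rmin_r]).
      assert (Hv1 : Rabs (v - v0) < d) by (eapply Rlt_le_trans; [exact Hv| apply Rmin_l]).
      assert (Hv2 : Rabs (v - v0) < r) by (eapply Rlt_le_trans; [exact Hv| apply Rmin_r]).
      rewrite (D1 u v), (D1 u0 v0); auto.
    - intros eps. destruct (cuv u0 v0 hu0 eps (cond_pos eps)) as [d [hd0 hdd]].
      assert (Hp : 0 < Rmin d r) by (apply Rmin_pos; lra).
      exists (mkposreal _ Hp). simpl. intros u v Hu Hv.
      assert (Hu1 : Rabs (u - u0) < d) by (eapply Rlt_le_trans; [exact Hu| apply Rmin_l]).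
      assert (Hu2 : Rabs (u - u0) < r) by (eapply Rlt_le_trans; [exact Hu| apply Rmin_r]).
      assert (Hv1 : Rabs (v - v0) < d) by (eapply Rlt_le_trans; [exact Hv| apply Rmin_l]).
      assert (Hv2 : Rabs (v - v0) < r) by (eapply Rlt_le_trans; [exact Hv| apply Rmin_r]).
      rewrite (D2 u v), (D2 u0 v0); auto. }
  assert (Em : m = guv u0 v0).
  { eapply uniqueness_limite. exact hm.
    apply (deriv_ext_loc (fun t => gu u0 t) _ v0 _ r); auto.
    - intros y Hy. symmetry. apply EGu. apply hball; auto.
    - apply hdu; auto. }
  rewrite Em, <- SW.
  apply (deriv_ext_loc (fun s => gv s v0) _ u0 _ r); auto.
  - intros y Hy. symmetry. apply EGv. apply hball; auto.
  - apply hdv; auto.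
Qed.


Lemma ip_ext n x y x' y' : (forall i, (i <= n)%nat -> x i = x' i) ->
  (forall i, (i <= n)%nat -> y i = y' i) -> ip n x y = ip n x' y'.
Proof.
  intros H1 H2. unfold ip. induction n; simpl.
  - rewrite H1, H2; auto.
  - rewrite IHn, H1, H2; auto.
Qed.

Lemma ip_sym n x y : ip n x y = ip n y x.
Proof. unfold ip. induction n; simpl; [ring| rewrite IHn; ring]. Qed.

Lemma ip_comb_l n c d x w y :
  ip n (fun i => c * x i + d * w i) y = c * ip n x y + d * ip n w y.
Proof. unfold ip. induction n; simpl; [ring| rewrite IHn; ring]. Qed.

Lemma ip_comb_r n c d x w y :
  ip n y (fun i => c * x i + d * w i) = c * ip n y x + d * ip n y w.
Proof. rewrite ip_sym, ip_comb_l, (ip_sym n x), (ip_sym n w). ring. Qed.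

Lemma ip_sub_l n x w y : ip n (fun i => x i - w i) y = ip n x y - ip n w y.
Proof. unfold ip. induction n; simpl; [ring| rewrite IHn; ring]. Qed.

Lemma ip_scal_l n c x y : ip n (fun i => c * x i) y = c * ip n x y.
Proof. unfold ip. induction n; simpl; [ring| rewrite IHn; ring]. Qed.

Lemma ip_zero_l n x y : (forall i, (i <= n)%nat -> x i = 0) -> ip n x y = 0.
Proof. intros H. unfold ip. induction n; simpl.
  - rewrite H; auto; ring.
  - rewrite IHn, H; auto; ring. Qed.

Lemma deriv_eq (f g : R -> R) x l l' : derivable_pt_lim f x l ->
  (forall t, f t = g t) -> l = l' -> derivable_pt_lim g x l'.
Proof. intros H He <-. exact (derivable_pt_lim_ext f g x l He H). Qed.

Lemma ip_S n x y : ip (S n) x y = ip n x y + eta (S n) * x (S n) * y (S n).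
Proof. reflexivity. Qed.

Lemma ip_deriv n (X Y : R -> vec) s dX dY :
  (forall i, (i <= n)%nat -> derivable_pt_lim (fun t => X t i) s (dX i)) ->
  (forall i, (i <= n)%nat -> derivable_pt_lim (fun t => Y t i) s (dY i)) ->
  derivable_pt_lim (fun t => ip n (X t) (Y t)) s (ip n dX (Y s) + ip n (X s) dY).
Proof.
  intros HX HY. induction n.
  - eapply deriv_eq.
    + apply (derivable_pt_lim_scal (fun t => X t 0%nat * Y t 0%nat) (eta 0)).
      apply (derivable_pt_lim_mult (fun t => X t 0%nat) (fun t => Y t 0%nat)); auto.
    + intros t. unfold ip, sum_f_R0. unfold mult_real_fct. ring.
    + unfold ip, sum_f_R0. ring.
  - eapply deriv_eq.
    + apply (derivable_pt_lim_plus (fun t => ip n (X t) (Y t))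
       (fun t => eta (S n) * (X t (S n) * Y t (S n)))).
      * apply IHn; auto.
      * apply (derivable_pt_lim_scal (fun t => X t (S n) * Y t (S n)) (eta (S n))).
        apply (derivable_pt_lim_mult (fun t => X t (S n)) (fun t => Y t (S n))); auto.
    + intros t. unfold plus_fct. rewrite ip_S. ring.
    + rewrite !ip_S. ring.
Qed.

Lemma ip_psd n x : 0 <= ip n x x + x 0%nat * x 0%nat.
Proof. unfold ip. induction n; simpl.
  - simpl. lra.
  - assert (0 <= x (S n) * x (S n)) by nra. lra. Qed.

Lemma ip_psd_zero n x : ip n x x + x 0%nat * x 0%nat = 0 ->
  forall i, (1 <= i <= n)%nat -> x i = 0.
Proof. unfold ip. induction n; simpl; intros H i Hi.
  - lia.
  - assert (A1 := ip_psd n x). unfold ip in A1.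
    assert (0 <= x (S n) * x (S n)) by nra.
    destruct (Nat.eq_dec i (S n)) as [->|Hne].
    + nra.
    + apply IHn; [lra| lia].
Qed.


Lemma tang_ip_l n a b X Y : ip n (tang n a b X) Y =
  ((gG n a b * ip n X a - gF n a b * ip n X b) / gdet n a b) * ip n a Y
  + ((gE n a b * ip n X b - gF n a b * ip n X a) / gdet n a b) * ip n b Y.
Proof. unfold tang. cbv zeta. apply ip_comb_l. Qed.


Lemma tang_a n a b (hW : gdet n a b <> 0) X : ip n (tang n a b X) a = ip n X a.
Proof. rewrite tang_ip_l. try rewrite (ip_sym n b a).
  unfold gdet, gE, gF, gG in *. field. auto. Qed.

Lemma tang_b n a b (hW : gdet n a b <> 0) X : ip n (tang n a b X) b = ip n X b.
Proof. rewrite tang_ip_l. try rewrite (ip_sym n b a).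
  unfold gdet, gE, gF, gG in *. field. auto. Qed.

Lemma norm_ip n a b X Y : ip n (norm_part n a b X) Y = ip n X Y - ip n (tang n a b X) Y.
Proof. unfold norm_part. apply ip_sub_l. Qed.

Lemma norm_a n a b (hW : gdet n a b <> 0) X : ip n (norm_part n a b X) a = 0.
Proof. rewrite norm_ip, tang_a; auto. ring. Qed.

Lemma norm_b n a b (hW : gdet n a b <> 0) X : ip n (norm_part n a b X) b = 0.
Proof. rewrite norm_ip, tang_b; auto. ring. Qed.

Lemma tang_normal n a b (hW : gdet n a b <> 0) X N : ip n a N = 0 -> ip n b N = 0 -> ip n (tang n a b X) N = 0.
Proof. intros H1 H2. rewrite tang_ip_l, H1, H2. ring. Qed.

Lemma norm_normal n a b (hW : gdet n a b <> 0) X N : ip n a N = 0 -> ip n b N = 0 -> ip n (norm_part n a b X) N = ip n X N.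
Proof. intros H1 H2. rewrite norm_ip, tang_normal; auto. ring. Qed.

Lemma tang_sym n a b (hW : gdet n a b <> 0) X Y : ip n (tang n a b X) Y = ip n (tang n a b Y) X.
Proof. rewrite !tang_ip_l. rewrite (ip_sym n a Y), (ip_sym n b Y), (ip_sym n a X), (ip_sym n b X).
  unfold gdet, gE, gF, gG in *. field. auto. Qed.


Lemma CS n x y : (ip n x y + x 0%nat * y 0%nat) ^ 2 <=
   (ip n x x + x 0%nat * x 0%nat) * (ip n y y + y 0%nat * y 0%nat).
Proof.
  assert (Q : forall t, 0 <= (ip n x x + x 0%nat * x 0%nat) + 2 * t * (ip n x y + x 0%nat * y 0%nat)
       + t * t * (ip n y y + y 0%nat * y 0%nat)).
  { intros t. pose proof (ip_psd n (fun i => 1 * x i + t * y i)) as P.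
    rewrite ip_comb_l, !ip_comb_r in P. rewrite (ip_sym n y x) in P. nra. }
  set (Sxx := ip n x x + x 0%nat * x 0%nat) in *.
  set (Sxy := ip n x y + x 0%nat * y 0%nat) in *.
  set (Syy := ip n y y + y 0%nat * y 0%nat) in *.
  assert (Pyy : 0 <= Syy) by apply ip_psd.
  destruct (Req_dec Syy 0) as [Z0|NZ].
  - destruct (Req_dec Sxy 0) as [Z1|NZ1].
    + rewrite Z1, Z0. nra.
    + exfalso. specialize (Q (- (Sxx + 1) / (2 * Sxy))). rewrite Z0 in Q.
      replace (Sxx + 2 * (- (Sxx + 1) / (2 * Sxy)) * Sxy) with (-1) in Q by (field; auto). nra.
  - specialize (Q (- Sxy / Syy)).
    assert (Q' : 0 <= Syy * (Sxx + 2 * (- Sxy / Syy) * Sxy + - Sxy / Syy * (- Sxy / Syy) * Syy)).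
    { apply Rmult_le_pos; lra. }
    replace (Syy * (Sxx + 2 * (- Sxy / Syy) * Sxy + - Sxy / Syy * (- Sxy / Syy) * Syy))
      with (Syy * Sxx - Sxy * Sxy) in Q' by (field; auto). nra.
Qed.

Lemma normal_zero n a b N : gdet n a b < 0 -> ip n N a = 0 -> ip n N b = 0 ->
  ip n N N = 0 -> vzero n N.
Proof.
  intros hW h1 h2 h3.
  set (E := gE n a b) in *. set (F := gF n a b) in *. set (G := gG n a b) in *.
  assert (Ex : exists c1 c2, c1 * c1 * E + 2 * c1 * c2 * F + c2 * c2 * G < 0).
  { unfold gdet in hW. fold E F G in hW.
    destruct (Rlt_dec G 0) as [Gn|Gn].
    - exists 0, 1. nra.
    - destruct (Req_dec G 0) as [G0|G0].
      + assert (F <> 0) by (intro; subst; nra).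
        exists 1, (- (E + 1) / (2 * F)).
        replace (1 * 1 * E + 2 * 1 * (- (E + 1) / (2 * F)) * F + - (E + 1) / (2 * F) * (- (E + 1) / (2 * F)) * G)
          with (-1) by (rewrite G0; field; auto). lra.
      + exists G, (-F). nra. }
  destruct Ex as [c1 [c2 Hc]].
  set (T := fun i => c1 * a i + c2 * b i).
  assert (TT : ip n T T = c1 * c1 * E + 2 * c1 * c2 * F + c2 * c2 * G).
  { unfold T. rewrite ip_comb_l, !ip_comb_r. unfold E, F, G, gE, gF, gG.
    rewrite (ip_sym n b a). ring. }
  assert (NT : ip n N T = 0).
  { unfold T. rewrite ip_comb_r, h1, h2. ring. }
  pose proof (CS n N T) as cs. rewrite NT, h3, TT in cs.
  assert (N0 : N 0%nat = 0).
  { destruct (Req_dec (N 0%nat) 0) as [Z|Z]; auto. exfalso.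
    pose proof (Rsqr_pos_lt _ Z) as Zp. unfold Rsqr in Zp.
    nra. }
  intros i Hi. destruct i as [|i]; auto.
  apply (ip_psd_zero n N); [rewrite h3, N0; ring| lia].
Qed.

Lemma stepA E F G h11 h12 h22 al be :
  E * G - F * F < 0 -> (al <> 0 \/ be <> 0) ->
  al * al * E + 2 * al * be * F + be * be * G = 0 ->
  h11 * al + h12 * be = 0 -> h12 * al + h22 * be = 0 ->
  G * h11 - 2 * F * h12 + E * h22 = 0.
Proof.
  intros hW hn hL r1 r2.
  set (T := G * h11 - 2 * F * h12 + E * h22).
  assert (e1 : al*al*h11 - be*be*h22 = al*(h11*al+h12*be) - be*(h12*al+h22*be)) by ring.
  assert (e2 : al*al*h12 + al*be*h22 = al*(h12*al+h22*be)) by ring.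
  assert (e3 : be*be*h12 + al*be*h11 = be*(h11*al+h12*be)) by ring.
  rewrite r1, r2 in e1. rewrite r2 in e2. rewrite r1 in e3.
  rewrite !Rmult_0_r, Rminus_0_r in e1. rewrite Rmult_0_r in e2, e3.
  assert (e4 : be*be*h22 - al*al*h11 = 0) by lra.
  assert (A1 : al * al * T = h22 * (al * al * E + 2 * al * be * F + be * be * G)).
  { assert (al*al*T - h22 * (al * al * E + 2 * al * be * F + be * be * G)
      = G*(al*al*h11 - be*be*h22) - 2*F*(al*al*h12 + al*be*h22)) by (unfold T; ring).
    rewrite e1, e2 in H. lra. }
  assert (A2 : be * be * T = h11 * (al * al * E + 2 * al * be * F + be * be * G)).
  { assert (be*be*T - h11 * (al * al * E + 2 * al * be * F + be * be * G)
      = E*(be*be*h22 - al*al*h11) - 2*F*(be*be*h12 + al*be*h11)) by (unfold T; ring).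
    rewrite e4, e3 in H. lra. }
  rewrite hL in A1, A2. fold T.
  destruct hn as [h|h].
  - assert (al * al <> 0) by (apply Rmult_integral_contrapositive; auto).
    apply (Rmult_eq_reg_l (al*al)); lra.
  - assert (be * be <> 0) by (apply Rmult_integral_contrapositive; auto).
    apply (Rmult_eq_reg_l (be*be)); lra.
Qed.


Lemma psi_deriv (e f g p q : R -> R) x de df dg dp dq :
  derivable_pt_lim e x de -> derivable_pt_lim f x df -> derivable_pt_lim g x dg ->
  derivable_pt_lim p x dp -> derivable_pt_lim q x dq ->
  derivable_pt_lim (fun s => g s * p s * p s - 2 * f s * p s * q s + e s * q s * q s) x
   (dg * p x * p x + g x * dp * p x + g x * p x * dp
    - 2 * (df * p x * q x + f x * dp * q x + f x * p x * dq)
    + de * q x * q x + e x * dq * q x + e x * q x * dq).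
Proof.
  intros He Hf Hg Hp Hq.
  assert (M3 : forall (a b c : R -> R) da db dc, derivable_pt_lim a x da ->
    derivable_pt_lim b x db -> derivable_pt_lim c x dc ->
    derivable_pt_lim (fun s => a s * b s * c s) x (da * b x * c x + a x * db * c x + a x * b x * dc)).
  { intros a b c da db dc Ha Hb Hc.
    assert (H2 := derivable_pt_lim_mult a b x da db Ha Hb).
    assert (H3 := derivable_pt_lim_mult _ c x _ dc H2 Hc).
    eapply deriv_eq. exact H3.
    - intros t. reflexivity.
    - unfold mult_fct. ring. }
  assert (D1 := M3 g p p dg dp dp Hg Hp Hp).
  assert (D2 := M3 f p q df dp dq Hf Hp Hq).
  assert (D3 := M3 e q q de dq dq He Hq Hq).
  assert (D4 := derivable_pt_lim_scal _ 2 x _ D2).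
  assert (D5 := derivable_pt_lim_minus _ _ x _ _ D1 D4).
  assert (D6 := derivable_pt_lim_plus _ _ x _ _ D5 D3).
  eapply deriv_eq. exact D6.
  - intros t. unfold plus_fct, minus_fct, mult_real_fct. ring.
  - ring.
Qed.

Lemma rowlem E F G p q aX bX aY bY XZ YZ :
  E * G - F * F <> 0 -> G*p*p - 2*F*p*q + E*q*q = 0 ->
  (G*p - F*q)*XZ + (E*q - F*p)*YZ + bY*p*p - (bX + aY)*p*q + aX*q*q = 0 ->
  ((G*p - F*q)/(E*G-F*F)) * (XZ - ((G*p - F*q)/(E*G-F*F))*aX - ((E*q - F*p)/(E*G-F*F))*bX)
  + ((E*q - F*p)/(E*G-F*F)) * (YZ - ((G*p - F*q)/(E*G-F*F))*aY - ((E*q - F*p)/(E*G-F*F))*bY) = 0.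
Proof.
  intros hW hP hD.
  set (W := E*G-F*F) in *.
  set (ex := ((G*p - F*q)/W) * (XZ - ((G*p - F*q)/W)*aX - ((E*q - F*p)/W)*bX)
  + ((E*q - F*p)/W) * (YZ - ((G*p - F*q)/W)*aY - ((E*q - F*p)/W)*bY)).
  assert (I : W * W * ex = W * ((G*p - F*q)*XZ + (E*q - F*p)*YZ + bY*p*p - (bX + aY)*p*q + aX*q*q)
      - (G*aX - F*(bX+aY) + E*bY) * (G*p*p - 2*F*p*q + E*q*q)).
  { unfold ex, W. field. exact hW. }
  rewrite hP, hD in I.
  assert (W * W <> 0) by (apply Rmult_integral_contrapositive; auto).
  apply (Rmult_eq_reg_l (W*W)); auto. rewrite I. ring.
Qed.

Lemma ip_comb3_l n c1 c2 c3 x y w Y :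
  ip n (fun i => c1 * x i - 2 * c2 * y i + c3 * w i) Y = c1 * ip n x Y - 2 * c2 * ip n y Y + c3 * ip n w Y.
Proof. unfold ip. induction n; simpl; [ring| rewrite IHn; ring]. Qed.


Definition Lv n (a b A B C : vec) : vec := fun i =>
  (gG n a b / gdet n a b) * A i - 2 * (gF n a b / gdet n a b) * B i + (gE n a b / gdet n a b) * C i.

Lemma meanH_eq n a b A B C : meanH n a b A B C = fun i => / 2 * norm_part n a b (Lv n a b A B C) i.
Proof. reflexivity. Qed.

Lemma ip_meanH n a b A B C Y : ip n (meanH n a b A B C) Y = / 2 * ip n (norm_part n a b (Lv n a b A B C)) Y.
Proof. rewrite meanH_eq. apply ip_scal_l. Qed.

Lemma ip_Lv n a b A B C Y : ip n (Lv n a b A B C) Y =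
  (gG n a b / gdet n a b) * ip n A Y - 2 * (gF n a b / gdet n a b) * ip n B Y + (gE n a b / gdet n a b) * ip n C Y.
Proof. unfold Lv. apply ip_comb3_l. Qed.

Definition ca n a b X := (gG n a b * ip n X a - gF n a b * ip n X b) / gdet n a b.
Definition cb n a b X := (gE n a b * ip n X b - gF n a b * ip n X a) / gdet n a b.

Lemma tang_eq n a b X : tang n a b X = fun i => ca n a b X * a i + cb n a b X * b i.
Proof. reflexivity. Qed.

Lemma tang_ip n a b X Y : ip n (tang n a b X) Y = ca n a b X * ip n a Y + cb n a b X * ip n b Y.
Proof. rewrite tang_eq. apply ip_comb_l. Qed.

Lemma null_coefs n a b Z : gdet n a b < 0 -> lightlike n (tang n a b Z) ->
  (ca n a b Z <> 0 \/ cb n a b Z <> 0) /\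
  ca n a b Z * ca n a b Z * gE n a b + 2 * ca n a b Z * cb n a b Z * gF n a b
   + cb n a b Z * cb n a b Z * gG n a b = 0.
Proof.
  intros hW [[i [Hi Hne]] Hn]. split.
  - destruct (Req_dec (ca n a b Z) 0) as [h1|h1]; auto.
    destruct (Req_dec (cb n a b Z) 0) as [h2|h2]; auto.
    exfalso. apply Hne. rewrite tang_eq, h1, h2. ring.
  - rewrite <- Hn. rewrite tang_eq, ip_comb_l, !ip_comb_r.
    unfold gE, gF, gG. rewrite (ip_sym n b a). ring.
Qed.

Lemma psi_zero n a b Z : gdet n a b < 0 -> lightlike n (tang n a b Z) ->
  gG n a b * ip n a Z * ip n a Z - 2 * gF n a b * ip n a Z * ip n b Z
  + gE n a b * ip n b Z * ip n b Z = 0.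
Proof.
  intros hW hL. destruct (null_coefs n a b Z hW hL) as [_ H].
  unfold ca, cb in H. rewrite (ip_sym n Z a), (ip_sym n Z b) in H.
  assert (hW' : gdet n a b <> 0) by lra.
  unfold gdet in hW'.
  set (E := gE n a b) in *. set (F := gF n a b) in *. set (G := gG n a b) in *.
  set (p := ip n a Z) in *. set (q := ip n b Z) in *.
  assert (I : (E*G - F*F) * (((G * p - F * q) / (E*G-F*F)) * ((G * p - F * q) / (E*G-F*F)) * E +
     2 * ((G * p - F * q) / (E*G-F*F)) * ((E * q - F * p) / (E*G-F*F)) * F +
     ((E * q - F * p) / (E*G-F*F)) * ((E * q - F * p) / (E*G-F*F)) * G)
   = G * p * p - 2 * F * p * q + E * q * q).
  { field. exact hW'. }
  unfold gdet in H. fold E F G in H. rewrite H in I. lra.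
Qed.


Lemma step1_point n a b A B C Z : gdet n a b < 0 -> lightlike n (tang n a b Z) ->
  (gG n a b * ip n a Z - gF n a b * ip n b Z) * ip n A Z
   + (gE n a b * ip n b Z - gF n a b * ip n a Z) * ip n B Z
   + ip n b B * ip n a Z * ip n a Z - (ip n b A + ip n a B) * ip n a Z * ip n b Z
   + ip n a A * ip n b Z * ip n b Z = 0 ->
  (gG n a b * ip n a Z - gF n a b * ip n b Z) * ip n B Z
   + (gE n a b * ip n b Z - gF n a b * ip n a Z) * ip n C Z
   + ip n b C * ip n a Z * ip n a Z - (ip n b B + ip n a C) * ip n a Z * ip n b Z
   + ip n a B * ip n b Z * ip n b Z = 0 ->
  ip n (meanH n a b A B C) Z = 0.
Proof.
  intros hW hL Du Dv.
  assert (hW' : gdet n a b <> 0) by lra.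
  destruct (null_coefs n a b Z hW hL) as [Hnz Hnull].
  pose proof (psi_zero n a b Z hW hL) as Ps.
  assert (Eal : ca n a b Z = (gG n a b * ip n a Z - gF n a b * ip n b Z) / (gE n a b * gG n a b - gF n a b * gF n a b)).
  { unfold ca, gdet. rewrite (ip_sym n Z a), (ip_sym n Z b). reflexivity. }
  assert (Ebe : cb n a b Z = (gE n a b * ip n b Z - gF n a b * ip n a Z) / (gE n a b * gG n a b - gF n a b * gF n a b)).
  { unfold cb, gdet. rewrite (ip_sym n Z a), (ip_sym n Z b). reflexivity. }
  assert (hW2 : gE n a b * gG n a b - gF n a b * gF n a b <> 0) by exact hW'.
  pose proof (rowlem _ _ _ _ _ (ip n a A) (ip n b A) (ip n a B) (ip n b B) (ip n A Z) (ip n B Z) hW2 Ps Du) as R1.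
  pose proof (rowlem _ _ _ _ _ (ip n a B) (ip n b B) (ip n a C) (ip n b C) (ip n B Z) (ip n C Z) hW2 Ps Dv) as R2.
  rewrite <- Eal, <- Ebe in R1, R2.
  set (al := ca n a b Z) in *. set (be := cb n a b Z) in *.
  assert (SA := stepA (gE n a b) (gF n a b) (gG n a b)
     (ip n A Z - al * ip n a A - be * ip n b A)
     (ip n B Z - al * ip n a B - be * ip n b B)
     (ip n C Z - al * ip n a C - be * ip n b C) al be).
  assert (T : gG n a b * (ip n A Z - al * ip n a A - be * ip n b A) -
       2 * gF n a b * (ip n B Z - al * ip n a B - be * ip n b B) +
       gE n a b * (ip n C Z - al * ip n a C - be * ip n b C) = 0).
  { apply SA; auto; try (unfold gdet in hW; lra); lra. }
  rewrite ip_meanH, norm_ip, (tang_sym n a b hW'), tang_ip.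
  fold al be. rewrite (ip_sym n a), (ip_sym n b), !ip_Lv.
  rewrite (ip_sym n A a), (ip_sym n B a), (ip_sym n C a), (ip_sym n A b), (ip_sym n B b), (ip_sym n C b).
  set (W := gdet n a b) in *.
  assert (I : / 2 * (gG n a b / W * ip n A Z - 2 * (gF n a b / W) * ip n B Z + gE n a b / W * ip n C Z -
   (al * (gG n a b / W * ip n a A - 2 * (gF n a b / W) * ip n a B + gE n a b / W * ip n a C) +
    be * (gG n a b / W * ip n b A - 2 * (gF n a b / W) * ip n b B + gE n a b / W * ip n b C)))
   = / 2 / W * (gG n a b * (ip n A Z - al * ip n a A - be * ip n b A) -
       2 * gF n a b * (ip n B Z - al * ip n a B - be * ip n b B) +
       gE n a b * (ip n C Z - al * ip n a C - be * ip n b C))).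
  { field. exact hW'. }
  rewrite I, T. ring.
Qed.

Lemma tangent_ip n a b X Z : gdet n a b <> 0 -> vzero n (norm_part n a b X) ->
  ip n X Z = ca n a b Z * ip n X a + cb n a b Z * ip n X b.
Proof.
  intros hW hX.
  rewrite (ip_ext n X Z (tang n a b X) Z).
  - rewrite tang_sym, tang_ip; auto. rewrite (ip_sym n a X), (ip_sym n b X). reflexivity.
  - intros i Hi. specialize (hX i Hi). unfold norm_part in hX. lra.
  - auto.
Qed.

Lemma step2_point n a b A B C Z Hu Hv : gdet n a b < 0 -> lightlike n (tang n a b Z) ->
  vzero n (norm_part n a b Hu) -> vzero n (norm_part n a b Hv) ->
  ip n Hu Z = 0 -> ip n Hv Z = 0 ->
  ip n Hu a + ip n (meanH n a b A B C) A = 0 -> ip n Hu b + ip n (meanH n a b A B C) B = 0 ->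
  ip n Hv a + ip n (meanH n a b A B C) B = 0 -> ip n Hv b + ip n (meanH n a b A B C) C = 0 ->
  vzero n (meanH n a b A B C).
Proof.
  intros hW hL tu tv zu zv e1 e2 e3 e4.
  assert (hW' : gdet n a b <> 0) by lra.
  destruct (null_coefs n a b Z hW hL) as [Hnz Hnull].
  set (H := meanH n a b A B C) in *.
  rewrite (tangent_ip n a b Hu Z hW' tu) in zu.
  rewrite (tangent_ip n a b Hv Z hW' tv) in zv.
  set (al := ca n a b Z) in *. set (be := cb n a b Z) in *.
  assert (T : gG n a b * ip n H A - 2 * gF n a b * ip n H B + gE n a b * ip n H C = 0).
  { assert (r1 : ip n H A * al + ip n H B * be = 0).
    { replace (ip n H A) with (- ip n Hu a) by lra. replace (ip n H B) with (- ip n Hu b) by lra. lra. }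
    assert (r2 : ip n H B * al + ip n H C * be = 0).
    { replace (ip n H B) with (- ip n Hv a) by lra. replace (ip n H C) with (- ip n Hv b) by lra. lra. }
    assert (hW2 : gE n a b * gG n a b - gF n a b * gF n a b < 0) by (unfold gdet in hW; lra).
    exact (stepA _ _ _ _ _ _ al be hW2 Hnz Hnull r1 r2). }
  assert (Ha : ip n H a = 0) by (unfold H; rewrite ip_meanH, norm_a; auto; ring).
  assert (Hb : ip n H b = 0) by (unfold H; rewrite ip_meanH, norm_b; auto; ring).
  apply (normal_zero n a b H hW Ha Hb).
  assert (HH : ip n H H = / 2 * ip n (Lv n a b A B C) H).
  { unfold H at 1. rewrite ip_meanH, norm_normal; auto; rewrite ip_sym; auto. }
  rewrite HH, ip_Lv, (ip_sym n A H), (ip_sym n B H), (ip_sym n C H).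
  assert (I : / 2 * (gG n a b / gdet n a b * ip n H A - 2 * (gF n a b / gdet n a b) * ip n H B +
    gE n a b / gdet n a b * ip n H C) = / 2 / gdet n a b * (gG n a b * ip n H A - 2 * gF n a b * ip n H B + gE n a b * ip n H C)).
  { field. exact hW'. }
  rewrite I, T. ring.
Qed.


Lemma ip_zero_r n x : ip n x (fun _ => 0) = 0.
Proof. rewrite ip_sym. apply ip_zero_l. auto. Qed.

Lemma const_deriv (Z : vec) s : forall i : nat, (i <= 0 + i)%nat -> derivable_pt_lim (fun _ : R => Z i) s 0.
Proof. intros. apply derivable_pt_lim_const. Qed.

Theorem mainTheorem7
  (n : nat) (U : R -> R -> Prop) (f fu fv fuu fuv fvv : R -> R -> vec) (Z : vec)
  (hU : open2 U)
  (hsmooth : smooth_map n U f)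
  (hfu : forall u v, U u v -> pdu n f u v (fu u v))
  (hfv : forall u v, U u v -> pdv n f u v (fv u v))
  (hfuu : forall u v, U u v -> pdu n fu u v (fuu u v))
  (hfuv : forall u v, U u v -> pdv n fu u v (fuv u v))
  (hfvv : forall u v, U u v -> pdv n fv u v (fvv u v))
  (htimelike : forall u v, U u v -> timelike_at n (fu u v) (fv u v))
  (hnull : forall u v, U u v -> lightlike n (tang n (fu u v) (fv u v) Z))
  (hparallel : forall u v, U u v -> exists Hu Hv : vec,
      pdu n (fun s t => meanH n (fu s t) (fv s t) (fuu s t) (fuv s t) (fvv s t)) u v Hu /\
      pdv n (fun s t => meanH n (fu s t) (fv s t) (fuu s t) (fuv s t) (fvv s t)) u v Hv /\
      vzero n (norm_part n (fu u v) (fv u v) Hu) /\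
      vzero n (norm_part n (fu u v) (fv u v) Hv)) :
  forall u v, U u v ->
    vzero n (meanH n (fu u v) (fv u v) (fuu u v) (fuv u v) (fvv u v)).
Proof.
  assert (S1 : forall u v, U u v -> pdu n fv u v (fuv u v)).
  { intros u v H i Hi.
    refine (mixed_sym U (fun s t => f s t i) (fun s t => fu s t i) (fun s t => fv s t i) u v (fuv u v i) hU _ H _ _ _).
    - apply hsmooth; auto.
    - intros x y Hxy. apply hfu; auto.
    - intros x y Hxy. apply hfv; auto.
    - apply hfuv; auto. }
  assert (CZ : forall s i, (i <= n)%nat -> derivable_pt_lim (fun _ : R => Z i) s 0).
  { intros. apply derivable_pt_lim_const. }
  assert (LocU : forall u v, U u v -> exists r, 0 < r /\ forall s, Rabs (s - u) < r -> U s v).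
  { intros u v H. destruct (hU u v H) as [r [hr hb]]. exists r. split; auto.
    intros s Hs. apply hb; auto. rewrite Rminus_diag, Rabs_R0. lra. }
  assert (LocV : forall u v, U u v -> exists r, 0 < r /\ forall t, Rabs (t - v) < r -> U u t).
  { intros u v H. destruct (hU u v H) as [r [hr hb]]. exists r. split; auto.
    intros t Ht. apply hb; auto. rewrite Rminus_diag, Rabs_R0. lra. }
  assert (Step1 : forall u v, U u v ->
     ip n (meanH n (fu u v) (fv u v) (fuu u v) (fuv u v) (fvv u v)) Z = 0).
  { intros u v Huv.
    assert (hW := htimelike u v Huv). unfold timelike_at in hW.
    apply (step1_point n _ _ _ _ _ Z hW (hnull u v Huv)).
    -
      assert (D := psi_deriv (fun s => gE n (fu s v) (fv s v)) (fun s => gF n (fu s v) (fv s v))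
        (fun s => gG n (fu s v) (fv s v)) (fun s => ip n (fu s v) Z) (fun s => ip n (fv s v) Z) u
        _ _ _ _ _
        (ip_deriv n (fun s => fu s v) (fun s => fu s v) u _ _ (hfuu u v Huv) (hfuu u v Huv))
        (ip_deriv n (fun s => fu s v) (fun s => fv s v) u _ _ (hfuu u v Huv) (S1 u v Huv))
        (ip_deriv n (fun s => fv s v) (fun s => fv s v) u _ _ (S1 u v Huv) (S1 u v Huv))
        (ip_deriv n (fun s => fu s v) (fun _ => Z) u _ _ (hfuu u v Huv) (CZ u))
        (ip_deriv n (fun s => fv s v) (fun _ => Z) u _ _ (S1 u v Huv) (CZ u))).
      destruct (LocU u v Huv) as [r [hr hl]].
      apply (deriv_zero_loc _ _ _ r hr) in D.
      2:{ intros s Hs. apply psi_zero. apply htimelike; auto. apply hnull; auto. }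
      rewrite !ip_zero_r in D. unfold gE, gF, gG in *.
      rewrite (ip_sym n (fuu u v) (fu u v)), (ip_sym n (fuu u v) (fv u v)),
        (ip_sym n (fuv u v) (fv u v)) in D.
      lra.
    -
      assert (D := psi_deriv (fun t => gE n (fu u t) (fv u t)) (fun t => gF n (fu u t) (fv u t))
        (fun t => gG n (fu u t) (fv u t)) (fun t => ip n (fu u t) Z) (fun t => ip n (fv u t) Z) v
        _ _ _ _ _
        (ip_deriv n (fun t => fu u t) (fun t => fu u t) v _ _ (hfuv u v Huv) (hfuv u v Huv))
        (ip_deriv n (fun t => fu u t) (fun t => fv u t) v _ _ (hfuv u v Huv) (hfvv u v Huv))
        (ip_deriv n (fun t => fv u t) (fun t => fv u t) v _ _ (hfvv u v Huv) (hfvv u v Huv))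
        (ip_deriv n (fun t => fu u t) (fun _ => Z) v _ _ (hfuv u v Huv) (CZ v))
        (ip_deriv n (fun t => fv u t) (fun _ => Z) v _ _ (hfvv u v Huv) (CZ v))).
      destruct (LocV u v Huv) as [r [hr hl]].
      apply (deriv_zero_loc _ _ _ r hr) in D.
      2:{ intros t Ht. apply psi_zero. apply htimelike; auto. apply hnull; auto. }
      rewrite !ip_zero_r in D. unfold gE, gF, gG in *.
      rewrite (ip_sym n (fuv u v) (fu u v)), (ip_sym n (fuv u v) (fv u v)),
        (ip_sym n (fvv u v) (fv u v)) in D.
      lra. }
  intros u v Huv.
  assert (hW := htimelike u v Huv). unfold timelike_at in hW.
  assert (hW' : gdet n (fu u v) (fv u v) <> 0) by lra.
  destruct (hparallel u v Huv) as [Hu [Hv [pu [pv [tu tv]]]]].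
  set (HH := fun s t => meanH n (fu s t) (fv s t) (fuu s t) (fuv s t) (fvv s t)) in *.
  assert (Ha : forall s t, U s t -> ip n (HH s t) (fu s t) = 0).
  { intros s t Hst. unfold HH. rewrite ip_meanH, norm_a. ring.
    pose proof (htimelike s t Hst). unfold timelike_at in H. lra. }
  assert (Hb : forall s t, U s t -> ip n (HH s t) (fv s t) = 0).
  { intros s t Hst. unfold HH. rewrite ip_meanH, norm_b. ring.
    pose proof (htimelike s t Hst). unfold timelike_at in H. lra. }
  destruct (LocU u v Huv) as [r [hr hl]].
  destruct (LocV u v Huv) as [r' [hr' hl']].
  apply (step2_point n _ _ _ _ _ Z Hu Hv hW (hnull u v Huv) tu tv).
  - assert (D := ip_deriv n (fun s => HH s v) (fun _ => Z) u _ _ pu (CZ u)).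
    apply (deriv_zero_loc _ _ _ r hr) in D.
    + rewrite ip_zero_r in D. lra.
    + intros s Hs. apply Step1; auto.
  - assert (D := ip_deriv n (fun t => HH u t) (fun _ => Z) v _ _ pv (CZ v)).
    apply (deriv_zero_loc _ _ _ r' hr') in D.
    + rewrite ip_zero_r in D. lra.
    + intros t Ht. apply Step1; auto.
  - assert (D := ip_deriv n (fun s => HH s v) (fun s => fu s v) u _ _ pu (hfuu u v Huv)).
    apply (deriv_zero_loc _ _ _ r hr) in D; [exact D|].
    intros s Hs. apply Ha; auto.
  - assert (D := ip_deriv n (fun s => HH s v) (fun s => fv s v) u _ _ pu (S1 u v Huv)).
    apply (deriv_zero_loc _ _ _ r hr) in D; [exact D|].
    intros s Hs. apply Hb; auto.
  - assert (D := ip_deriv n (fun t => HH u t) (fun t => fu u t) v _ _ pv (hfuv u v Huv)).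
    apply (deriv_zero_loc _ _ _ r' hr') in D; [exact D|].
    intros t Ht. apply Ha; auto.
  - assert (D := ip_deriv n (fun t => HH u t) (fun t => fv u t) v _ _ pv (hfvv u v Huv)).
    apply (deriv_zero_loc _ _ _ r' hr') in D; [exact D|].
    intros t Ht. apply Hb; auto.
Qed.
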